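(* Let $E\subseteq Z$ be nonempty, $\gamma\in\Delta^\circ(E)$, $i\in\mathcal I$ and $\theta,\theta'\in\Theta$. Then $$\big[\mathcal L_i^Y(\eta,\theta)\subseteq\mathcal L_i^Y(\eta,\theta')\text{ for all }\eta\in\Delta(E)\big]\iff\mathcal L_i^Y(\gamma,\theta)\subseteq\mathcal L_i^Y(\gamma,\theta').$$
   Context: $Z$ is a finite set, $Y=\Delta(Z)$, $\mathcal I$ a finite set of agents, $\Theta$ a set of states; for each $(i,\theta)$, $u_i^\theta:Z\to\mathbb R$ and $U_i^\theta(y)=\sum_zy_zu_i^\theta(z)$. $\mathcal L_i^Y(\alpha,\theta)=\{y\in Y:U_i^\theta(\alpha)\ge U_i^\theta(y)\}$. For nonempty $E\subseteq Z$, $\Delta(E)$ is the set of lotteries supported in $E$ and $\Delta^\circ(E)$ the set of lotteries whose support is exactly $E$. *)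

(* Defs.v *)
From mathcomp Require Import all_boot all_order all_algebra.
From mathcomp Require Import reals.
Set Implicit Arguments. Unset Strict Implicit. Unset Printing Implicit Defensive.
Import Order.TTheory GRing.Theory Num.Theory.
Local Open Scope ring_scope.

Section Defs.
Variables (R : realType) (Z : finType).

(* Y = Delta(Z): lotteries on the finite set Z *)
Definition lottery (y : {ffun Z -> R}) : Prop :=
  (forall z, 0 <= y z) /\ \sum_(z : Z) y z = 1.

Definition lotteryOn (E : {set Z}) (y : {ffun Z -> R}) : Prop :=
  lottery y /\ (forall z, z \notin E -> y z = 0).

(* Delta°(E): lotteries whose support is exactly E *)
Definition lotteryFull (E : {set Z}) (y : {ffun Z -> R}) : Prop :=
  lottery y /\ (forall z, (y z != 0) = (z \in E)).

Definition EU (u : Z -> R) (y : {ffun Z -> R}) : R := \sum_(z : Z) y z * u z.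

Definition lowerY (u : Z -> R) (alpha : {ffun Z -> R}) (y : {ffun Z -> R}) : Prop :=
  lottery y /\ EU u y <= EU u alpha.
End Defs.

(* Main.v *)
Require Import Defs.
From mathcomp Require Import all_boot all_order all_algebra.
From mathcomp Require Import reals.
From mathcomp Require Import ring lra.
Import Order.TTheory GRing.Theory Num.Theory.
Local Open Scope ring_scope.

Lemma lot_le1 (R : realType) (Z : finType) (y : {ffun Z -> R}) z :
  lottery y -> y z <= 1.
Proof.
move=> [h0 h1]; rewrite -h1 (bigD1 z) //= lerDl.
by apply: sumr_ge0 => ? _.
Qed.

Lemma EU_comb (R : realType) (Z : finType) (u : Z -> R) (g y e : {ffun Z -> R}) (l : R) :
  EU u [ffun z => g z + l * (y z - e z)] = EU u g + l * (EU u y - EU u e).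
Proof.
rewrite /EU -sumrB mulr_sumr -big_split /=; apply: eq_bigr => z _.
rewrite ffunE; ring.
Qed.

Lemma key1 (R : realType) (a l b c : R) : 0 < l -> b <= c -> a + l * (b - c) <= a.
Proof. by move=> hl hb; rewrite gerDl pmulr_rle0 // subr_le0. Qed.

Lemma key2 (R : realType) (a l b c : R) : 0 < l -> a + l * (b - c) <= a -> b <= c.
Proof. by move=> hl; rewrite gerDl pmulr_rle0 // subr_le0. Qed.

Theorem lemma11 (R : realType) (Z : finType) (I Theta : Type)
  (u : I -> Theta -> Z -> R)
  (E : {set Z}) (hE : E != set0)
  (gamma : {ffun Z -> R}) (hgamma : lotteryFull E gamma)
  (i : I) (th th' : Theta) :
  (forall eta : {ffun Z -> R}, lotteryOn E eta ->
     forall y, lowerY (u i th) eta y -> lowerY (u i th') eta y)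
  <->
  (forall y, lowerY (u i th) gamma y -> lowerY (u i th') gamma y).
Proof.
case: hgamma => [[g0 g1] gE].
split.
  move=> H; apply: H; split; first by split.
  by move=> z zE; apply/eqP; rewrite -[_ == _]negbK gE.
move=> H eta [[e0 e1] eE] y [[y0 y1] hy].
split; first by split.
set l := \prod_(z in E) gamma z.
have gpos : forall z, z \in E -> 0 < gamma z.
  by move=> z zE; rewrite lt_def g0 andbT gE.
have lpos : 0 < l by apply: prodr_gt0.
have lle : forall z, z \in E -> l <= gamma z.
  move=> z zE; rewrite /l (bigD1 z) //= ler_piMr //.
  apply: prodr_ile1 => x /andP[xE _]; rewrite g0 /=.
  by apply: lot_le1.
set y' := [ffun z => gamma z + l * (y z - eta z)].
have ly' : lottery y'.
  split.
    move=> z; rewrite ffunE.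
    case: (boolP (z \in E)) => zE.
      have := lle z zE; have := @lot_le1 _ _ _ z (conj e0 e1).
      have := y0 z; have := e0 z; move=> a b c d.
      have : l * eta z <= l by rewrite ler_piMr // ltW.
      have : 0 <= l * y z by rewrite mulr_ge0 // ltW.
      move=> p q; by rewrite mulrBr addrCA addr_ge0 // subr_ge0 (le_trans q d).
    by rewrite (eE z zE) subr0 addr_ge0 // mulr_ge0 // ltW.
  rewrite /y'; under eq_bigr do rewrite ffunE.
  rewrite big_split /= -mulr_sumr sumrB g1 y1 e1; ring.
have hth : EU (u i th) y' <= EU (u i th) gamma.
  by rewrite /y' EU_comb; exact: (@key1 R _ _ _ _ lpos hy).
have [_] := H y' (conj ly' hth).
rewrite /y' EU_comb.
exact: (@key2 R _ _ _ _ lpos).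
Qed.
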